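(* Let $\beta>0$, $\gamma>0$, $T$ a positive integer, and $(\eta_t)_{t\ge1}$ positive step sizes. Then: (i) If $\eta_t=C\le2/(\beta+\gamma)$ for all $t$, then $\sum_{t=1}^T\eta_t\prod_{j=t+1}^T(1-\eta_j\gamma)=\frac{1-(1-C\gamma)^T}{\gamma}$. (ii) If $\eta_t=C/t\le2/(\beta+\gamma)$ for $t\ge1+\lceil\beta/\gamma\rceil$ for some $C\ge2/\gamma$, and $\eta_t=C'/t\le2/(\beta+\gamma)$ for $t\le\lceil\beta/\gamma\rceil$ for some $C'<2/(\gamma+\beta)$, then $\sum_{t=1}^T\eta_t\prod_{j=t+1}^T\left(1-\frac{\eta_j\gamma}{2}\right)\le C\log\left(e^2\lceil\beta/\gamma\rceil\right)$. (iii) If $\eta_t\le C/t<2/\beta$ for all $t$, then $\sum_{t=1}^T\eta_t\prod_{j=t+1}^T(1+\beta\eta_j)^2\le C e^{2C\beta}T^{2C\beta}\min\left\{1+\frac1{2C\beta},\ \log(eT)\right\}$. *)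

(* Defs.v *)
From HB Require Import structures.
From mathcomp Require Import all_boot all_order all_algebra.
From mathcomp Require Import all_classical all_reals all_analysis.
Set Implicit Arguments. Unset Strict Implicit. Unset Printing Implicit Defensive.
Import Order.TTheory GRing.Theory Num.Theory.
Local Open Scope ring_scope.

Definition ceil_nat {R : realType} (x : R) : nat := `|Num.ceil x|%N.

Definition wsum {R : realType} (eta : nat -> R) (phi : R -> R) (T : nat) : R :=
  \sum_(1 <= t < T.+1) (eta t * \prod_(t.+1 <= j < T.+1) phi (eta j)).

(* Main.v *)
Require Import Defs.
From HB Require Import structures.
From mathcomp Require Import all_boot all_order all_algebra.
From mathcomp Require Import all_classical all_reals all_analysis.
From mathcomp Require Import ring lra.
Import Order.TTheory GRing.Theory Num.Theory.
Local Open Scope ring_scope.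

Section Aux.
Variable R : realType.
Implicit Types (eta : nat -> R) (phi : R -> R).

Lemma wsum0 eta phi : wsum eta phi 0 = 0.
Proof. by rewrite /wsum big_geq. Qed.

Lemma wsumS eta phi T :
  wsum eta phi T.+1 = wsum eta phi T * phi (eta T.+1) + eta T.+1.
Proof.
rewrite /wsum big_nat_recr //= [X in eta T.+1 * X]big_geq // mulr1.
congr (_ + _); rewrite big_distrl /= !big_nat; apply: eq_bigr => t /andP[_ ht].
by rewrite big_nat_recr //= mulrA.
Qed.

Lemma wsum_ge0 eta phi T :
  (forall t, (1 <= t)%N -> 0 <= eta t) ->
  (forall t, (1 <= t)%N -> 0 <= phi (eta t)) -> 0 <= wsum eta phi T.
Proof.
move=> he hp; rewrite /wsum big_nat; apply: sumr_ge0 => t /andP[t1 _].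
apply: mulr_ge0; first exact: he.
rewrite big_nat; apply: prodr_ge0 => j /andP[tj _]; apply: hp.
exact: leq_trans t1 (ltnW tj).
Qed.

Definition harm (n : nat) : R := \sum_(1 <= t < n.+1) (t%:R)^-1.

Lemma harm0 : harm 0 = 0.
Proof. by rewrite /harm big_geq. Qed.

Lemma harmS n : harm n.+1 = harm n + (n.+1%:R)^-1.
Proof. by rewrite /harm big_nat_recr. Qed.

Lemma harm_ge0 n : 0 <= harm n.
Proof. by rewrite /harm big_nat; apply: sumr_ge0 => t _; rewrite invr_ge0. Qed.

Lemma ln_step (m : nat) : (0 < m)%N ->
  ln (m%:R : R) + (m.+1%:R)^-1 <= ln (m.+1%:R).
Proof.
move=> m0.
have hm : (0 : R) < m%:R by rewrite ltr0n.
have hm1 : (0 : R) < m.+1%:R by rewrite ltr0n.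
set x : R := (m.+1%:R)^-1.
have hx : m%:R = m.+1%:R * (1 - x).
  rewrite /x mulrBr mulr1 mulfV ?gt_eqF // -natr1; ring.
have hle : (m%:R : R) <= m.+1%:R * expR (- x).
  rewrite hx ler_pM2l //; have := expR_ge1Dx (- x); lra.
have := hle; rewrite -ler_ln ?posrE ?mulr_gt0 ?expR_gt0 //.
rewrite lnM ?posrE ?expR_gt0 // expRK; lra.
Qed.

Lemma harm_le n : (1 <= n)%N -> harm n <= 1 + ln n%:R.
Proof.
elim: n => [//|n IH _].
case: n IH => [_|n IH].
  by rewrite harmS harm0 ln1 invr1 add0r addr0.
rewrite harmS; apply: le_trans (lerD (IH isT) (lexx _)) _.
by rewrite -addrA lerD2l; apply: ln_step.
Qed.

Lemma phi_ok (e bt g : R) : 0 < e -> 0 < bt -> 0 < g -> e <= 2 / (bt + g) ->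
  0 <= 1 - e * g / 2 /\ 1 - e * g / 2 <= 1.
Proof.
move=> e0 bt0 g0; rewrite ler_pdivlMr ?addr_gt0 // mulrDr => h.
have h1 : 0 <= e * bt by rewrite mulr_ge0 // ltW.
have h2 : 0 <= e * g by rewrite mulr_ge0 // ltW.
split; lra.
Qed.

End Aux.

Theorem lemma16 (R : realType) (beta gamma : R) (T : nat) (eta : nat -> R)
  (hbeta : 0 < beta) (hgamma : 0 < gamma) (hT : (0 < T)%N)
  (heta : forall t : nat, (1 <= t)%N -> 0 < eta t) :
  (* (i) constant step size *)
  (forall C : R,
     (forall t : nat, (1 <= t)%N -> eta t = C) ->
     C <= 2 / (beta + gamma) ->
     wsum eta (fun x => 1 - x * gamma) T = (1 - (1 - C * gamma) ^+ T) / gamma) /\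
  (* (ii) step size C/t after ceil(beta/gamma), C'/t before *)
  (forall C C' : R,
     2 / gamma <= C ->
     C' < 2 / (gamma + beta) ->
     (forall t : nat, (1 + ceil_nat (beta / gamma) <= t)%N ->
        eta t = C / t%:R /\ C / t%:R <= 2 / (beta + gamma)) ->
     (forall t : nat, (1 <= t)%N -> (t <= ceil_nat (beta / gamma))%N ->
        eta t = C' / t%:R /\ C' / t%:R <= 2 / (beta + gamma)) ->
     wsum eta (fun x => 1 - x * gamma / 2) T
       <= C * ln (expR 2 * (ceil_nat (beta / gamma))%:R)) /\
  (* (iii) step size at most C/t < 2/beta *)
  (forall C : R,
     (forall t : nat, (1 <= t)%N -> eta t <= C / t%:R /\ C / t%:R < 2 / beta) ->
     wsum eta (fun x => (1 + beta * x) ^+ 2) T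
       <= C * expR (2 * C * beta) * (T%:R `^ (2 * C * beta))
          * Num.min (1 + 1 / (2 * C * beta)) (ln (expR 1 * T%:R))).
Proof.
have g0 : gamma != 0 by rewrite gt_eqF.
split; [|split].
- move=> C hC _.
  elim: T {hT} => [|n IH]; first by rewrite wsum0 expr0 subrr mul0r.
  by rewrite wsumS IH hC // exprS; field.
- move=> C C' hC hC' hbig hsmall.
  set k := ceil_nat (beta / gamma).
  have k1 : (1 <= k)%N.
    rewrite /k /ceil_nat absz_gt0; apply: lt0r_neq0.
    by rewrite ceil_gt0 divr_gt0.
  have kR : (0:R) < k%:R by rewrite ltr0n.
  have lnk : 0 <= ln (k%:R : R) by rewrite ln_ge0 // ler1n.
  have hE t : (1 <= t)%N -> eta t <= 2 / (beta + gamma).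
    move=> t1; case: (leqP t k) => htk.
      by have [-> ->] := hsmall t t1 htk.
    by have := hbig t; rewrite add1n => /(_ htk) [-> ->].
  have hphi t : (1 <= t)%N -> 0 <= 1 - eta t * gamma / 2 /\ 1 - eta t * gamma / 2 <= 1.
    by move=> t1; apply: (@phi_ok _ _ beta) => //; [exact: heta | exact: hE].
  pose W n := wsum eta (fun x => 1 - x * gamma / 2) n.
  have W0 n : 0 <= W n.
    apply: wsum_ge0 => t t1; [exact: ltW (heta t t1) | exact: (proj1 (hphi t t1))].
  have C'0 : 0 < C'.
    have [e1 _] := hsmall 1%N isT k1; have := heta 1%N isT.
    by rewrite e1 mulr1n divr1.
  have C0 : 0 < C.
    apply: lt_le_trans hC; by rewrite divr_gt0.
  have CC' : C' <= C.
    apply: le_trans (ltW hC') _; apply: le_trans hC.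
    rewrite ler_wpM2l // lef_pV2 ?posrE ?addr_gt0 //.
    by rewrite lerDl ltW.
  have InvA n : (n <= k)%N -> W n <= C' * harm R n.
    elim: n => [|n IH] hn; first by rewrite /W wsum0 harm0 mulr0.
    have [_ p1] := hphi n.+1 isT.
    rewrite /W wsumS -/(W n) harmS [C' * _]mulrDr.
    apply: lerD.
      apply: le_trans (IH (ltnW hn)).
      by rewrite -[X in _ <= X]mulr1 ler_wpM2l.
    by have [-> _] := hsmall n.+1 isT hn.
  set M := C * (2 + ln (k%:R : R)).
  have hHk n : (n <= k)%N -> harm R n <= 1 + ln (k%:R : R).
    case: n => [|n] hn.
      rewrite harm0; lra.
    apply: le_trans (@harm_le R n.+1 isT) _.
    by rewrite lerD2l ler_ln ?posrE ?ltr0n // ler_nat.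
  have InvB n : W n <= M.
    elim: n => [|n IH].
      by rewrite /W wsum0 mulr_ge0 // ?(ltW C0) // addr_ge0.
    case: (leqP n.+1 k) => hn.
      apply: le_trans (InvA _ hn) _.
      apply: le_trans (ler_wpM2r (harm_ge0 _ _) CC') _.
      apply: le_trans (ler_wpM2l (ltW C0) (hHk _ hn)) _.
      rewrite ler_wpM2l ?(ltW C0) // lerD2r; lra.
    have := hbig n.+1; rewrite add1n => /(_ hn) [eE _].
    have [p0 p1] := hphi n.+1 isT.
    rewrite /W wsumS -/(W n).
    rewrite eE in p0 p1 *.
    have h2C : 2 <= C * gamma by rewrite -ler_pdivrMr.
    have m1 : (1 : R) <= n.+1%:R by rewrite ler1n.
    move: (n.+1%:R) m1 p0 p1 => m m1 p0 p1.
    have m0 : 0 < m by apply: lt_le_trans m1.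
    have u0 : 0 < m^-1 by rewrite invr_gt0.
    have u1 : m^-1 <= 1 by rewrite invf_le1.
    have hq : 1 - C / m * gamma / 2 <= 1 - m^-1.
      rewrite lerD2l lerN2.
      have -> : C / m * gamma / 2 = m^-1 * (C * gamma / 2) by ring.
      apply: ler_peMr; [exact: ltW | lra].
    have h1 : W n * (1 - C / m * gamma / 2) <= W n * (1 - m^-1) by rewrite ler_wpM2l.
    have h2 : W n * (1 - m^-1) <= M * (1 - m^-1) by rewrite ler_wpM2r // subr_ge0.
    have CM : C <= M by rewrite /M ler_peMr ?(ltW C0) //; lra.
    have h3 : C * m^-1 <= M * m^-1 by rewrite ler_wpM2r // ltW.
    have h4 : M * (1 - m^-1) + M * m^-1 = M by ring.
    lra.
  rewrite lnM ?posrE ?expR_gt0 // expRK.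
  exact: InvB T.
- move=> C hC.
  have C0 : 0 < C.
    have [h1 _] := hC 1%N isT; have := heta 1%N isT; rewrite mulr1n divr1 in h1.
    by move=> h; exact: lt_le_trans h h1.
  set b := C * beta.
  have b0 : 0 < b by rewrite mulr_gt0.
  have -> : 2 * C * beta = 2 * b by rewrite /b mulrA.
  pose P n := \prod_(1 <= j < n.+1) (1 + b / j%:R) ^+ 2.
  pose W n := wsum eta (fun x => (1 + beta * x) ^+ 2) n.
  have PS n : P n.+1 = P n * (1 + b / n.+1%:R) ^+ 2 by rewrite /P big_nat_recr.
  have r1 n : 1 <= (1 + b / n.+1%:R) ^+ 2.
    have : 0 <= b / n.+1%:R by rewrite divr_ge0 // ltW.
    move: (b / _) => y y0; rewrite expr2; nra.
  have P1 n : 1 <= P n.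
    elim: n => [|n IH]; first by rewrite /P big_geq.
    by rewrite PS mulr_ege1.
  have W0 n : 0 <= W n.
    apply: wsum_ge0 => t t1; [exact: ltW (heta t t1) | exact: sqr_ge0].
  have hph n : (1 + beta * eta n.+1) ^+ 2 <= (1 + b / n.+1%:R) ^+ 2.
    have [he _] := hC n.+1 isT.
    have e0 := heta n.+1 isT.
    have h : beta * eta n.+1 <= b / n.+1%:R.
      have -> : b / n.+1%:R = beta * (C / n.+1%:R) by rewrite /b; ring.
      by rewrite ler_pM2l.
    have u0 : 0 <= beta * eta n.+1 by rewrite mulr_ge0 // ltW.
    move: h u0; move: (beta * eta n.+1) (b / n.+1%:R) => u v h u0.
    rewrite !expr2; nra.
  have hetaC n : eta n.+1 <= C / n.+1%:R by have [] := hC n.+1 isT.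
  set K := C / (2 * b).
  have K0 : 0 <= K by rewrite divr_ge0 // ltW // mulr_gt0.
  have Inv1 n : W n <= K * (P n - 1).
    elim: n => [|n IH]; first by rewrite /W wsum0 /P big_geq // subrr mulr0.
    rewrite /W wsumS -/(W n) PS.
    set x := b / n.+1%:R; set r := (1 + x) ^+ 2.
    have x0 : 0 <= x by rewrite divr_ge0 // ltW.
    have h1 : W n * (1 + beta * eta n.+1) ^+ 2 <= W n * r by rewrite ler_wpM2l.
    have h2 : W n * r <= K * (P n - 1) * r by rewrite ler_wpM2r // /r sqr_ge0.
    have h3 : C / n.+1%:R = K * (2 * x).
      rewrite /K /x; field; rewrite ?pnatr_eq0 //; apply/andP; split => //.
      by rewrite gt_eqF.
    have h4 : K * (P n * r - 1) - (K * (P n - 1) * r + K * (2 * x)) = K * (x * x).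
      by rewrite /r; ring.
    have h5 : 0 <= K * (x * x) by rewrite mulr_ge0 // mulr_ge0.
    apply: le_trans (lerD (le_trans h1 h2) (hetaC n)) _.
    by rewrite h3 -subr_ge0 h4.
  have Inv2 n : W n <= C * harm R n * P n.
    elim: n => [|n IH]; first by rewrite /W wsum0 harm0 mulr0 mul0r.
    rewrite /W wsumS -/(W n) PS harmS.
    set r := (1 + b / n.+1%:R) ^+ 2.
    have h1 : W n * (1 + beta * eta n.+1) ^+ 2 <= W n * r by rewrite ler_wpM2l.
    have h2 : W n * r <= C * harm R n * P n * r by rewrite ler_wpM2r // /r sqr_ge0.
    have h5 : C / n.+1%:R <= C / n.+1%:R * (P n * r).
      apply: ler_peMr; [by rewrite divr_ge0 ?(ltW C0) | exact: mulr_ege1 (P1 n) (r1 n)].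
    have h6 : C * (harm R n + (n.+1%:R)^-1) * (P n * r)
      = C * harm R n * P n * r + C / n.+1%:R * (P n * r) by ring.
    apply: le_trans (lerD (le_trans h1 h2) (le_trans (hetaC n) h5)) _.
    by rewrite h6.
  have Pexp n : P n <= expR (2 * b * harm R n).
    elim: n => [|n IH]; first by rewrite /P big_geq // harm0 mulr0 expR0.
    rewrite PS harmS.
    set x := b / n.+1%:R.
    have x0 : 0 <= x by rewrite divr_ge0 // ltW.
    have -> : 2 * b * (harm R n + (n.+1%:R)^-1) = 2 * b * harm R n + (x + x).
      by rewrite /x; ring.
    rewrite expRD expRD; apply: ler_pM => //.
    - by rewrite /P big_nat prodr_ge0 // => j _; exact: sqr_ge0.
    - exact: sqr_ge0.
    - rewrite expr2; apply: ler_pM; rewrite ?addr_ge0 //; have := expR_ge1Dx x; lra.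
  have T0 : (0 : R) < T%:R by rewrite ltr0n.
  set E := expR (2 * b) * T%:R `^ (2 * b).
  have hPE : P T <= E.
    apply: le_trans (Pexp T) _.
    have -> : E = expR (2 * b * (1 + ln T%:R)).
      rewrite /E /powR ifF ?gt_eqF // -expRD; congr expR; ring.
    by rewrite ler_expR ler_wpM2l ?harm_le // mulr_ge0 // ltW.
  have E0 : 0 <= E := le_trans ler01 (le_trans (P1 T) hPE).
  have -> : C * expR (2 * b) * T%:R `^ (2 * b) = C * E by rewrite /E mulrA.
  rewrite minEle; case: ifP => _.
  + have h1 := Inv1 T; rewrite -/(W T).
    have h2 : K * P T <= K * E by rewrite ler_wpM2l.
    have h3 : C * E * (1 + 1 / (2 * b)) = K * E + C * E.
      by rewrite /K; field; rewrite gt_eqF // mulr_gt0.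
    have h4 : 0 <= C * E by rewrite mulr_ge0 // ltW.
    lra.
  + have h1 := Inv2 T; rewrite -/(W T).
    rewrite lnM ?posrE ?expR_gt0 // expRK.
    have h2 : C * harm R T * P T <= C * harm R T * E.
      by rewrite ler_wpM2l // mulr_ge0 ?harm_ge0 // ltW.
    have h3 : C * harm R T * E <= C * (1 + ln T%:R) * E.
      by rewrite ler_wpM2r // ler_wpM2l ?(ltW C0) // harm_le.
    have h4 : C * E * (1 + ln T%:R) = C * (1 + ln T%:R) * E by ring.
    lra.
Qed.
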